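(* Let $f_1:\mathbb{R}^m\to(-\infty,+\infty]$ be proper convex lower semi-continuous, $B\in\mathbb{R}^{m\times d}$, and $f_2(x)=\frac1n\sum_{i=1}^n\phi_i(x)$ with each $\phi_i:\mathbb{R}^d\to\mathbb{R}$ smooth and convex. Let $(x_k,v_k)_{k\ge1}$ be generated by Algorithm 1 (described in the context) with parameters $c>0$, $\alpha\in(0,1]$ and $0<\lambda\le 1/\rho_{\max}(BB^T)$. Let $x^*$ be a minimizer of $f_1(Bx)+f_2(x)$ over $\mathbb{R}^d$ and let $v^*\in\mathbb{R}^m$ be such that, for every $k$, with $h_k(x)=\frac{\lambda}{\gamma_k}f_1(\frac{\gamma_k}{\lambda}x)$, $$v^*=(I-\mathrm{Prox}_{h_k})\Big(\tfrac{\lambda}{\gamma_k}B\big(x^*-\gamma_k\nabla f_2(x^* )\big)+(I-\lambda BB^T)v^*\Big),\qquad x^*=x^*-\gamma_k\nabla f_2(x^* )-\gamma_kB^Tv^*.$$ Then for every $k\ge1$, $$\begin{aligned}\mathbb{E}^{(k+1)}\Big(\|x_{k+1}-x^*\|_2^2+\tfrac{\gamma_{k+1}^2}{\lambda}\|v_{k+1}-v^*\|_2^2\Big)\le\ &\mathbb{E}^{(k)}\big(\|x_k-x^*\|_2^2\big)+\tfrac{\gamma_k^2}{\lambda}\big(1-\lambda\rho_{\min}(BB^T)\big)\mathbb{E}^{(k)}\big(\|v_k-v^*\|_2^2\big)\\ &-2\gamma_k\,\mathbb{E}^{(k)}\langle\nabla f_2(x_k)-\nabla f_2(x^* ),x_k-x^*\rangle\\&+\gamma_k^2\,\mathbb{E}^{(k+1)}\big(\|\nabla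 f_2^{[i_k]}(x_k)-\nabla f_2(x^* )\|_2^2\big).\end{aligned}$$
   Context: $\mathrm{Prox}_f(y)=\arg\min_x\{f(x)+\frac12\|x-y\|_2^2\}$. $\rho_{\max}(BB^T)$ and $\rho_{\min}(BB^T)$ are the largest and smallest eigenvalues of $BB^T$. Stochastic gradient: fix a batch size $p$ dividing $n$; for $i\in\{1,\dots,n/p\}$ let $\nabla f_2^{[i]}(x)=\frac1p\sum_{j=(i-1)p+1}^{ip}\nabla\phi_j(x)$. Algorithm 1: choose $x_1\in\mathbb{R}^d$, $v_1\in\mathbb{R}^m$; for $k=1,2,\dots$: set $\gamma_k=c/k^\alpha$; draw $i_k$ from $\{1,\dots,n/p\}$, each value with probability $p/n$, independently of the past; set $x_{k+1/2}=x_k-\gamma_k\nabla f_2^{[i_k]}(x_k)$, $v_{k+1}=\frac{\lambda}{\gamma_k}\big(I-\mathrm{Prox}_{\frac{\gamma_k}{\lambda}f_1}\big)\big(Bx_{k+1/2}+(I-\lambda BB^T)\frac{\gamma_k}{\lambda}v_k\big)$, $x_{k+1}=x_{k+1/2}-\gamma_kB^Tv_{k+1}$. $\mathbb{E}^{(k)}(\cdot)$ denotes expectation with respect to all random indices drawn up to the $k$-th iterate (i.e. $i_1,\dots,i_{k-1}$, which determine $x_k,v_k$); thus $\mathbb{E}^{(k+1)}$ also averages over $i_k$. *)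

(* Defs.v *)
From HB Require Import structures.
From mathcomp Require Import all_boot all_order all_algebra.
From mathcomp Require Import all_classical all_reals all_analysis.
Set Implicit Arguments. Unset Strict Implicit. Unset Printing Implicit Defensive.
Import Order.TTheory GRing.Theory Num.Theory.
Import numFieldNormedType.Exports.
Local Open Scope ring_scope.

Definition dotv {R : realType} {d : nat} (u w : 'cV[R]_d) : R :=
  \sum_(j < d) u j 0 * w j 0.
Definition sqn {R : realType} {d : nat} (u : 'cV[R]_d) : R := dotv u u.

Definition convex_fun {R : realType} {d : nat} (f : 'cV[R]_d -> R) : Prop :=
  forall (x y : 'cV[R]_d) (t : R), 0 <= t <= 1 ->
    f (t *: x + (1 - t) *: y) <= t * f x + (1 - t) * f y.

Definition proper_fun {R : realType} {m : nat} (f : 'cV[R]_m -> \bar R) : Prop :=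
  (forall x, f x != -oo%E) /\ (exists x, f x != +oo%E).
Definition econvex_fun {R : realType} {m : nat} (f : 'cV[R]_m -> \bar R) : Prop :=
  forall (x y : 'cV[R]_m) (t : R), 0 < t < 1 ->
    (f ((t *: x + (1 - t) *: y)%R) <= t%:E * f x + ((1 - t)%R)%:E * f y)%E.

Definition is_gradient {R : realType} {d : nat} (f : 'cV[R]_d -> R)
  (g : 'cV[R]_d -> 'cV[R]_d) : Prop :=
  forall x, differentiable f x /\ forall h, 'd f x h = dotv (g x) h.

Definition is_prox {R : realType} {m : nat} (h : 'cV[R]_m -> \bar R)
  (y q : 'cV[R]_m) : Prop :=
  forall x, (h q + (2^-1 * sqn (q - y))%R%:E <= h x + (2^-1 * sqn (x - y))%R%:E)%E.

(* Minibatch gradient nabla f_2^{[i]} (blocks indexed from 0):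
   block i = { j : i*p <= j < i*p + p }. *)
Definition block_grad {R : realType} {d n : nat} (p N : nat)
  (grad : 'I_n -> 'cV[R]_d -> 'cV[R]_d) (i : 'I_N) (x : 'cV[R]_d) : 'cV[R]_d :=
  (p%:R)^-1 *: \sum_(j < n | (i * p <= j < i * p + p)%N) grad j x.

Definition full_grad {R : realType} {d n : nat}
  (grad : 'I_n -> 'cV[R]_d -> 'cV[R]_d) (x : 'cV[R]_d) : 'cV[R]_d :=
  (n%:R)^-1 *: \sum_(j < n) grad j x.

Definition gamma {R : realType} (c alpha : R) (k : nat) : R :=
  c / (k%:R `^ alpha).

(* Algorithm 1.  The iterate x_{t+1}, v_{t+1} (1-based index k = t+1) is a
   function X t s, V t s of the t indices s = (i_1, ..., i_t) drawn so far
   (blocks numbered 0 .. N-1).  x_1 = X 0 [tuple], v_1 = V 0 [tuple] arbitrary. *)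
Definition algorithm1 {R : realType} {m d n : nat} (p N : nat)
  (f1 : 'cV[R]_m -> \bar R) (B : 'M[R]_(m, d))
  (grad : 'I_n -> 'cV[R]_d -> 'cV[R]_d) (c alpha lambda : R)
  (X : forall t : nat, t.-tuple 'I_N -> 'cV[R]_d)
  (V : forall t : nat, t.-tuple 'I_N -> 'cV[R]_m) : Prop :=
  forall (t : nat) (s : t.-tuple 'I_N) (i : 'I_N),
    let g := gamma c alpha t.+1 in
    let xh := X t s - g *: block_grad p grad i (X t s) in
    let z := B *m xh + (1%:M - lambda *: (B *m B^T)) *m ((g / lambda) *: V t s) in
    (exists q, is_prox (fun u => ((g / lambda)%R%:E * f1 u)%E) z q /\
       V t.+1 (rcons_tuple s i) = (lambda / g) *: (z - q)) /\
    X t.+1 (rcons_tuple s i) = xh - g *: (B^T *m V t.+1 (rcons_tuple s i)).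

(* E^{(k)} with k = t+1: uniform average over the t independent indices. *)
Definition expect {R : realType} (N t : nat) (F : t.-tuple 'I_N -> R) : R :=
  (N%:R ^+ t)^-1 * \sum_(s : t.-tuple 'I_N) F s.

(* E^{(k+1)}: average over (i_1,...,i_{k-1}) = s and the fresh index i_k = i. *)
Definition expect_next {R : realType} (N t : nat)
  (G : t.-tuple 'I_N -> 'I_N -> R) : R :=
  (N%:R ^+ t.+1)^-1 * \sum_(s : t.-tuple 'I_N) \sum_(i : 'I_N) G s i.

(* Main.v *)
Require Import Defs.
From HB Require Import structures.
From mathcomp Require Import all_boot all_order all_algebra.
From mathcomp Require Import all_classical all_reals all_analysis.
From mathcomp Require Import lra ring.
Import Order.TTheory GRing.Theory Num.Theory.
Import numFieldNormedType.Exports.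
Local Open Scope ring_scope.

Section Dot.
Context {R : realType}.

Lemma dotvDl {d} (u1 u2 w : 'cV[R]_d) : dotv (u1 + u2) w = dotv u1 w + dotv u2 w.
Proof. by rewrite /dotv -big_split; apply: eq_bigr => j _; rewrite !mxE mulrDl. Qed.
Lemma dotvDr {d} (u w1 w2 : 'cV[R]_d) : dotv u (w1 + w2) = dotv u w1 + dotv u w2.
Proof. by rewrite /dotv -big_split; apply: eq_bigr => j _; rewrite !mxE mulrDr. Qed.
Lemma dotvNl {d} (u w : 'cV[R]_d) : dotv (- u) w = - dotv u w.
Proof. by rewrite /dotv -sumrN; apply: eq_bigr => j _; rewrite !mxE mulNr. Qed.
Lemma dotvNr {d} (u w : 'cV[R]_d) : dotv u (- w) = - dotv u w.
Proof. by rewrite /dotv -sumrN; apply: eq_bigr => j _; rewrite !mxE mulrN. Qed.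
Lemma dotvBl {d} (u1 u2 w : 'cV[R]_d) : dotv (u1 - u2) w = dotv u1 w - dotv u2 w.
Proof. by rewrite dotvDl dotvNl. Qed.
Lemma dotvBr {d} (u w1 w2 : 'cV[R]_d) : dotv u (w1 - w2) = dotv u w1 - dotv u w2.
Proof. by rewrite dotvDr dotvNr. Qed.
Lemma dotvZl {d} k (u w : 'cV[R]_d) : dotv (k *: u) w = k * dotv u w.
Proof. by rewrite /dotv mulr_sumr; apply: eq_bigr => j _; rewrite !mxE mulrA. Qed.
Lemma dotvZr {d} k (u w : 'cV[R]_d) : dotv u (k *: w) = k * dotv u w.
Proof. rewrite /dotv mulr_sumr; apply: eq_bigr => j _; rewrite !mxE; ring. Qed.
Lemma dotvC {d} (u w : 'cV[R]_d) : dotv u w = dotv w u.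
Proof. by rewrite /dotv; apply: eq_bigr => j _; rewrite mulrC. Qed.
Lemma dotv_mulmx {p q} (A : 'M[R]_(p, q)) (u : 'cV[R]_p) (w : 'cV[R]_q) :
  dotv u (A *m w) = dotv (A^T *m u) w.
Proof.
rewrite /dotv; under eq_bigr do rewrite mxE big_distrr.
rewrite exchange_big; apply: eq_bigr => k _; rewrite !mxE big_distrl.
by apply: eq_bigr => j _; rewrite !mxE /=; ring.
Qed.
Lemma sqn_ge0 {d} (u : 'cV[R]_d) : 0 <= sqn u.
Proof. by apply: sumr_ge0 => j _; rewrite -expr2 sqr_ge0. Qed.
Lemma sqn_eq0 {d} (u : 'cV[R]_d) : sqn u = 0 -> u = 0.
Proof.
move=> /eqP; rewrite /sqn /dotv psumr_eq0; last by move=> j _; rewrite -expr2 sqr_ge0.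
move=> /allP h; apply/matrixP => i j; rewrite ord1 mxE.
have := h i (mem_index_enum _); rewrite mulf_eq0 orbb => /eqP ->. by [].
Qed.
Lemma sqnD {d} (u w : 'cV[R]_d) : sqn (u + w) = sqn u + 2 * dotv u w + sqn w.
Proof. by rewrite /sqn !dotvDl !dotvDr (dotvC w u); ring. Qed.
Lemma sqnB {d} (u w : 'cV[R]_d) : sqn (u - w) = sqn u - 2 * dotv u w + sqn w.
Proof. by rewrite /sqn !dotvBl !dotvBr (dotvC w u); ring. Qed.
Lemma sqnZ {d} k (u : 'cV[R]_d) : sqn (k *: u) = k ^+ 2 * sqn u.
Proof. by rewrite /sqn dotvZl dotvZr; ring. Qed.

End Dot.

Section Rayleigh.
Local Open Scope classical_set_scope.

Lemma sum_cont (R : realType) (T : topologicalType) (I : Type) (s : seq I)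
  (F : I -> T -> R) : (forall i, continuous (F i)) ->
  continuous (fun x => \sum_(i <- s) F i x).
Proof.
move=> h; elim: s => [|a s IH].
  have -> : (fun x => \sum_(i <- [::]) F i x) = (fun _ => 0).
    by apply/funext => x; rewrite big_nil.
  exact: cst_continuous.
have -> : (fun x => \sum_(i <- a :: s) F i x) = (F a + (fun x => \sum_(i <- s) F i x)).
  by apply/funext => x; rewrite big_cons.
by move=> x; apply: continuousD; [exact: h | exact: IH].
Qed.

Lemma small_le0 (R : realType) (a b : R) : (forall t, 0 < t -> a <= t * b) -> a <= 0.
Proof.
move=> h; rewrite leNgt; apply/negP => a0.
have k0 : 0 < `|b| + 1 by rewrite ltr_pwDr // normr_ge0.
have := h (a / (`|b| + 1)) (divr_gt0 a0 k0).
rewrite mulrAC -(ler_pM2r k0) divfK ?gt_eqF //.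
have := ler_norm b; nra.
Qed.

Lemma rayleigh_max (R : realType) (m : nat) (S : 'M[R]_m) : S^T = S -> (0 < m)%N ->
  exists mu, eigenvalue S mu /\ forall w : 'cV[R]_m, dotv w (S *m w) <= mu * sqn w.
Proof.
move=> Ssym m0.
pose f := fun u : 'rV[R]_m => dotv u^T (S *m u^T).
pose A := (fun u : 'rV[R]_m => sqn u^T) @^-1` [set x | x = 1].
have sqnE' : forall u : 'rV[R]_m, sqn u^T = \sum_(j <- index_enum 'I_m) (u ord0 j * u ord0 j).
  by move=> u; rewrite /sqn /dotv; apply: eq_bigr => j _; rewrite !mxE.
have sqnE : (fun u : 'rV[R]_m => sqn u^T) = (fun u => \sum_(j <- index_enum 'I_m) (u ord0 j * u ord0 j)).
  by apply/funext => u; rewrite sqnE'.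
have fE : f = (fun u => \sum_(j <- index_enum 'I_m) (u ord0 j * \sum_(k <- index_enum 'I_m) (S j k * u ord0 k))).
  apply/funext => u; rewrite /f /dotv; apply: eq_bigr => j _; rewrite !mxE.
  by congr (_ * _); apply: eq_bigr => k _; rewrite !mxE.
have csqn : continuous (fun u : 'rV[R]_m => sqn u^T).
  rewrite sqnE; apply: sum_cont => j u; apply: continuousM; exact: coord_continuous.
have cf : continuous f.
  rewrite fE; apply: sum_cont => j u; apply: continuousM; first exact: coord_continuous.
  apply: (@sum_cont _ _ _ _ (fun k (u : 'rV[R]_m) => S j k * u ord0 k)) => k x.
  apply: continuousM; [exact: cst_continuous | exact: coord_continuous].
have Acl : closed A.
  apply: preimage_closed; last exact: closed_eq.
  by move=> x _; exact: csqn.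
have Abd : bounded_set A.
  rewrite /bounded_set /= /bounded_near.
  near=> M => u Au /=.
  have u1 : `|u| <= 1.
    rewrite [leLHS]/Num.norm /= mx_normrE; apply: bigmax_le => // -[i j] _ /=.
    rewrite ord1 ler_norml.
    have : u ord0 j * u ord0 j <= 1.
      rewrite -Au /= sqnE' (bigD1 j) //= lerDl.
      by apply: sumr_ge0 => k _; rewrite -expr2 sqr_ge0.
    by move=> h; apply/andP; split; nra.
  apply: le_trans u1 _; near: M; apply: nbhs_pinfty_ge; exact: num_real.
have Acp : compact A by exact: bounded_closed_compact.
have An0 : A !=set0.
  exists (delta_mx ord0 (Ordinal m0)); rewrite /A /= sqnE' (bigD1 (Ordinal m0)) //= big1.
    by rewrite !mxE !eqxx mulr1 addr0.
  by move=> k /negbTE hk; rewrite !mxE hk andbF mulr0.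
have [c cA cmax] := EVT_max_rV An0 Acp (continuous_subspaceT cf).
have cA' : sqn c^T = 1 by move: cA; rewrite inE.
pose mu := f c.
have bound : forall w : 'cV_m, dotv w (S *m w) <= mu * sqn w.
  move=> w; have [w0|wpos] := eqVneq (sqn w) 0.
    by rewrite w0 mulr0 (sqn_eq0 _ w0) mulmx0 /dotv big1 // => j _; rewrite mxE mul0r.
  have sp : 0 < sqn w by rewrite lt_neqAle eq_sym wpos sqn_ge0.
  pose r := Num.sqrt (sqn w).
  have r0 : 0 < r by rewrite sqrtr_gt0.
  have rr : r ^+ 2 = sqn w by rewrite sqr_sqrtr // sqn_ge0.
  have uA : ((r^-1 *: w)^T) \in A.
    by rewrite inE /A /= trmxK sqnZ exprVn rr mulVf // gt_eqF.
  have := cmax _ uA; rewrite /f trmxK -scalemxAr dotvZl dotvZr => h.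
  have : r^+2 * (r^-1 * (r^-1 * dotv w (S *m w))) <= r^+2 * mu.
    by rewrite ler_pM2l // exprn_gt0.
  have -> : r^+2 * (r^-1 * (r^-1 * dotv w (S *m w))) = dotv w (S *m w).
    by field; rewrite gt_eqF.
  by rewrite rr mulrC.
pose c' := c^T.
pose rv := S *m c' - mu *: c'.
have e1 : dotv c' (S *m rv) = dotv rv (S *m c') by rewrite dotv_mulmx Ssym dotvC.
have e2 : sqn rv = dotv rv (S *m c') - mu * dotv c' rv.
  by rewrite /sqn {2}/rv dotvBr dotvZr (dotvC rv c').
have e3 : dotv c' (S *m c') = mu by [].
have key : forall t, 0 < t -> sqn rv <= t * ((mu * sqn rv - dotv rv (S *m rv)) / 2).
  move=> t t0; have := bound (c' + t *: rv).
  rewrite mulmxDr -scalemxAr dotvDl !dotvDr !dotvZl !dotvZr sqnD sqnZ dotvZr.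
  rewrite e1 e3 cA' => h.
  nra.
have rv0 : rv = 0.
  apply: sqn_eq0; apply/eqP; rewrite eq_le sqn_ge0 andbT.
  by apply: small_le0 => t t0; apply: key.
exists mu; split => //.
apply/eigenvalueP; exists c.
  apply: trmx_inj; rewrite trmx_mul Ssym linearZ /=.
  by apply/eqP; rewrite -subr_eq0 -/c' -/rv rv0.
by apply/eqP => c0; move: cA'; rewrite c0 trmx0 /sqn /dotv big1 => [/eqP|j _]; rewrite ?mxE ?mul0r // eq_sym oner_eq0.
Unshelve. all: by end_near.
Qed.

End Rayleigh.

Lemma spec_bounds (R : realType) (m d : nat) (B : 'M[R]_(m, d)) (rho_max rho_min : R) :
  eigenvalue (B *m B^T) rho_max ->
  (forall a, eigenvalue (B *m B^T) a -> a <= rho_max) ->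
  (forall a, eigenvalue (B *m B^T) a -> rho_min <= a) ->
  forall w : 'cV[R]_m, rho_min * sqn w <= sqn (B^T *m w) <= rho_max * sqn w.
Proof.
move=> emax hmax hmin w.
have m0 : (0 < m)%N.
  case: m B emax hmax hmin w => // B /eigenvalueP [v _ /negP]; case; apply/eqP.
  by apply/matrixP => i [].
have Ssym : (B *m B^T)^T = B *m B^T by rewrite trmx_mul trmxK.
have qE : forall S : 'M[R]_m, S = B *m B^T -> dotv w (S *m w) = sqn (B^T *m w).
  by move=> S ->; rewrite -mulmxA dotv_mulmx.
apply/andP; split.
- have SNsym : (- (B *m B^T))^T = - (B *m B^T) by rewrite linearN /= Ssym.
  have [mu [emu hmu]] := rayleigh_max _ _ _ SNsym m0.
  have : eigenvalue (B *m B^T) (- mu).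
    move/eigenvalueP: emu => [v hv vn0]; apply/eigenvalueP; exists v => //.
    by rewrite scaleNr -hv mulmxN opprK.
  move/hmin => h1; have := hmu w; rewrite mulNmx dotvNr (qE _ erefl) => h2.
  have := sqn_ge0 w; nra.
- have [mu [emu hmu]] := rayleigh_max _ _ _ Ssym m0.
  have := hmax _ emu; have := hmu w; rewrite (qE _ erefl) => h1 h2.
  have := sqn_ge0 w; nra.
Qed.

Lemma prox_fin (R : realType) (m : nat) (f1 : 'cV[R]_m -> \bar R) (a s : R)
  (y q : 'cV[R]_m) : 0 < a -> 0 < s -> proper_fun f1 ->
  is_prox (fun u => (a%:E * f1 (s *: u))%E) y q -> exists r, f1 (s *: q) = r%:E.
Proof.
move=> a0 s0 [nmi [x0 x0fin]] hp.
have := hp (s^-1 *: x0); rewrite scalerA mulfV ?gt_eqF // scale1r.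
move: x0fin (nmi x0) (nmi (s *: q)).
case: (f1 x0) => [r0| |] // _ _; case: (f1 (s *: q)) => [r| |] //; first by exists r.
by rewrite gt0_muley ?lte_fin // addye.
Qed.

Lemma prox_ineq (R : realType) (m : nat) (f1 : 'cV[R]_m -> \bar R) (a s : R)
  (y q x : 'cV[R]_m) (fq fx : R) : 0 < a -> econvex_fun f1 ->
  is_prox (fun u => (a%:E * f1 (s *: u))%E) y q ->
  f1 (s *: q) = fq%:E -> f1 (s *: x) = fx%:E ->
  forall t, 0 < t < 1 ->
  a * fq <= a * fx + dotv (q - y) (x - q) + t / 2 * sqn (x - q).
Proof.
move=> a0 conv hp Eq Ex t /andP[t0 t1].
pose mid := t *: x + (1 - t) *: q.
have hc := conv (s *: x) (s *: q) t; rewrite t0 t1 /= in hc.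
have smid : s *: mid = t *: (s *: x) + (1 - t) *: (s *: q).
  by apply/matrixP => i j; rewrite !mxE; ring.
have := hp mid; rewrite smid Eq.
rewrite Ex Eq in hc.
have ha : (0 <= a%:E)%E by rewrite lee_fin ltW.
move=> h; have := le_trans h (leeD2r _ (lee_wpmul2l ha (hc isT))).
rewrite -!EFinM -!EFinD lee_fin => {h} h.
have midE : mid - y = (q - y) + t *: (x - q).
  by apply/matrixP => i j; rewrite !mxE; ring.
move: h; rewrite midE (sqnD (q - y)) sqnZ dotvZr => h.
rewrite -(ler_pM2l t0).
have -> : t * (a * fx + dotv (q - y) (x - q) + t / 2 * sqn (x - q)) =
  a * (t * fx) + t * dotv (q - y) (x - q) + t ^+ 2 / 2 * sqn (x - q) by ring.
lra.
Qed.

Lemma small_le0' (R : realType) (a b : R) : 0 <= b ->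
  (forall t, 0 < t < 1 -> a <= t * b) -> a <= 0.
Proof.
move=> b0 h; apply: small_le0 => t t0.
have t10 : 0 < t + 1 by rewrite addr_gt0.
have ht : 0 < t / (t + 1) < 1.
  by rewrite divr_gt0 //= ltr_pdivrMr // mul1r ltrDl.
apply: (le_trans (h _ ht)); apply: ler_wpM2r => //.
rewrite ler_pdivrMr //; nra.
Qed.

Lemma prox_key (R : realType) (m : nat) (f1 : 'cV[R]_m -> \bar R) (a : R)
  (z w vs vn q : 'cV[R]_m) : 0 < a -> proper_fun f1 -> econvex_fun f1 ->
  is_prox (fun u => (a%:E * f1 u)%E) z q ->
  is_prox (fun u => ((a^-1)%:E * f1 (a *: u))%E) w (w - vs) ->
  vn = a^-1 *: (z - q) ->
  a * sqn (vn - vs) <= dotv (vn - vs) (z - a *: w).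
Proof.
move=> a0 pf conv H1 H2 hvn.
have ai0 : 0 < a^-1 by rewrite invr_gt0.
have an0 : a != 0 by rewrite gt_eqF.
have hp1 : is_prox (fun u => (a%:E * f1 (1 *: u))%E) z q.
  by move=> x; rewrite !scale1r; exact: H1 x.
have [p1 E1] := @prox_fin _ _ f1 a 1 z q a0 ltr01 pf hp1.
have [p2 E2] := @prox_fin _ _ f1 a^-1 a w (w - vs) ai0 a0 pf H2.
have E1' : f1 (1 *: (a *: (w - vs))) = p2%:E by rewrite scale1r.
have E2' : f1 (a *: (a^-1 *: q)) = p1%:E by rewrite scalerA mulfV.
have I1 := @prox_ineq _ _ f1 a 1 z q _ _ _ a0 conv hp1 E1 E1'.
have I2 := @prox_ineq _ _ f1 a^-1 a w (w - vs) _ _ _ ai0 conv H2 E2 E2'.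
pose D := q - a *: (w - vs).
have v1 : a *: (w - vs) - q = - D by apply/matrixP => i j; rewrite !mxE; ring.
have v2 : q - z = - (a *: vn).
  by rewrite hvn; apply/matrixP => i j; rewrite !mxE; field.
have v3 : (w - vs) - w = - vs by apply/matrixP => i j; rewrite !mxE; ring.
have v4 : a^-1 *: q - (w - vs) = a^-1 *: D.
  by apply/matrixP => i j; rewrite !mxE; field.
have v5 : D = (z - a *: w) - a *: (vn - vs).
  by rewrite /D hvn; apply/matrixP => i j; rewrite !mxE; field.
have sqnN : sqn (- D) = sqn D by rewrite /sqn dotvNl dotvNr opprK.
have Z0 := sqn_ge0 D.
have main : - (a * (dotv vn D - dotv vs D)) <= 0.
  apply: (@small_le0' _ _ (sqn D) Z0) => t ht.
  have h1 := I1 t ht; have h2 := I2 t ht.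
  rewrite v1 v2 sqnN dotvNl dotvNr opprK dotvZl in h1.
  rewrite v3 v4 sqnZ dotvNl dotvZr in h2.
  have a20 : 0 < a ^+ 2 by rewrite exprn_gt0.
  move: h2; rewrite -(ler_pM2l a20).
  have -> : a ^+ 2 * (a^-1 * p2) = a * p2 by field.
  have -> : a ^+ 2 * (a^-1 * p1 + - (a^-1 * dotv vs D) + t / 2 * (a^-1 ^+ 2 * sqn D))
    = a * p1 - a * dotv vs D + t / 2 * sqn D by field.
  move=> h2; lra.
have : 0 <= dotv (vn - vs) D.
  rewrite dotvBl; rewrite oppr_le0 in main.
  by rewrite -(pmulr_rge0 _ a0).
by rewrite v5 dotvBr dotvZr /sqn subr_ge0.
Qed.

Lemma pointwise (R : realType) (m d : nat) (f1 : 'cV[R]_m -> \bar R) (B : 'M[R]_(m, d))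
  (g gn lambda rho_min : R) (x xs G F xn : 'cV[R]_d) (v vs vn q : 'cV[R]_m) :
  0 < g -> 0 < lambda -> 0 <= gn <= g -> proper_fun f1 -> econvex_fun f1 ->
  (forall w : 'cV[R]_m, rho_min * sqn w <= sqn (B^T *m w)) ->
  (forall w : 'cV[R]_m, lambda * sqn (B^T *m w) <= sqn w) ->
  let z := B *m (x - g *: G) + (1%:M - lambda *: (B *m B^T)) *m ((g / lambda) *: v) in
  is_prox (fun u => ((g / lambda)%:E * f1 u)%E) z q ->
  vn = (lambda / g) *: (z - q) ->
  xn = (x - g *: G) - g *: (B^T *m vn) ->
  let w := (lambda / g) *: (B *m (xs - g *: F)) + (1%:M - lambda *: (B *m B^T)) *m vs in
  is_prox (fun u => ((lambda / g)%:E * f1 ((g / lambda) *: u)%R)%E) w (w - vs) ->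
  xs = xs - g *: F - g *: (B^T *m vs) ->
  sqn (xn - xs) + gn ^+ 2 / lambda * sqn (vn - vs) <=
  sqn (x - xs) + g ^+ 2 / lambda * (1 - lambda * rho_min) * sqn (v - vs)
  - 2 * g * dotv (G - F) (x - xs) + g ^+ 2 * sqn (G - F).
Proof.
move=> g0 l0 /andP[gn0 gng] pf conv hmin hpsd z P1 hvn hxn w P2 hxs.
pose a := g / lambda.
have a0 : 0 < a by rewrite divr_gt0.
have ainv : lambda / g = a^-1 by rewrite invf_div.
rewrite ainv in hvn P2.
have key := @prox_key _ _ f1 a z w vs vn q a0 pf conv P1 P2 hvn.
pose M := 1%:M - lambda *: (B *m B^T).
pose e := (x - g *: G) - (xs - g *: F).
pose Dl := vn - vs.
pose u := v - vs.
have zw : z - a *: w = B *m e + M *m (a *: u).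
  rewrite /z /w /e /u /M ainv scalerDr scalerA mulfV ?gt_eqF // scale1r.
  by rewrite -!scalemxAr !mulmxBr scalerBr opprD addrACA.
rewrite zw dotvDr dotv_mulmx -scalemxAr dotvZr /M mulmxBl mul1mx -scalemxAl (dotvBr (vn - vs) u) dotvZr in key.
rewrite -mulmxA (dotv_mulmx B) in key.
have ex : xn - xs = e - g *: (B^T *m (vn - vs)).
  rewrite hxn /e mulmxBr.
  move: hxs; set bn := B^T *m vn; set bs := B^T *m vs => hxs.
  apply/matrixP => i j; have := congr1 (fun N0 : 'cV[R]_d => N0 i j) hxs; rewrite !mxE => h.
  lra.
have ee : e = (x - xs) - g *: (G - F) by apply/matrixP => i j; rewrite /e !mxE; ring.
have hp := hpsd ((vn - vs) - u); rewrite mulmxBr (sqnB (vn - vs)) (sqnB (B^T *m (vn - vs))) in hp.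
have hr := hmin u.
rewrite ex (sqnB e) dotvZr (dotvC e) sqnZ ee (sqnB (x - xs)) dotvZr sqnZ (dotvC (x - xs)).
rewrite ee in key.
rewrite /u in key hp hr.
set Q := dotv (B^T *m (vn - vs)) (x - xs - g *: (G - F)) in key *.
set Dv := sqn (vn - vs) in key hp *.
set C1 := dotv (vn - vs) (v - vs) in key hp *.
set C2 := dotv (B^T *m (vn - vs)) (B^T *m (v - vs)) in key hp *.
set U := sqn (v - vs) in hp hr *.
set BU := sqn (B^T *m (v - vs)) in hp hr *.
set Rr := sqn (B^T *m (vn - vs)) in hp *.
have K1 : g ^+ 2 / lambda * Dv <= g * Q + g ^+ 2 / lambda * C1 - g ^+ 2 * C2.
  have := key; rewrite -(ler_pM2l g0) /a.
  have -> : g * (g / lambda * Dv) = g ^+ 2 / lambda * Dv by field; rewrite gt_eqF.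
  have -> : g * (Q + g / lambda * (C1 - lambda * C2)) = g * Q + g ^+ 2 / lambda * C1 - g ^+ 2 * C2.
    by field; rewrite gt_eqF.
  by [].
have k0 : 0 <= g ^+ 2 / lambda by rewrite divr_ge0 // ?sqr_ge0 ?ltW.
have K2 : g ^+ 2 * (Rr - 2 * C2 + BU) <= g ^+ 2 / lambda * (Dv - 2 * C1 + U).
  have := ler_wpM2l k0 hp.
  have -> : g ^+ 2 / lambda * (lambda * (Rr - 2 * C2 + BU)) = g ^+ 2 * (Rr - 2 * C2 + BU).
    by field; rewrite gt_eqF.
  by [].
have K3 : g ^+ 2 * (rho_min * U) <= g ^+ 2 * BU by rewrite ler_wpM2l ?sqr_ge0.
have K4 : gn ^+ 2 / lambda * Dv <= g ^+ 2 / lambda * Dv.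
  apply: ler_wpM2r; first exact: sqn_ge0.
  apply: ler_wpM2r; first by rewrite invr_ge0 ltW.
  by rewrite lerXn2r // ?nnegrE ?ltW.
have -> : g ^+ 2 / lambda * (1 - lambda * rho_min) * U = g ^+ 2 / lambda * U - g ^+ 2 * (rho_min * U).
  by field; rewrite gt_eqF.
lra.
Qed.

Lemma dotv_suml (R : realType) d (I : Type) (r : seq I) (f : I -> 'cV[R]_d) (w : 'cV[R]_d) :
  dotv (\sum_(i <- r) f i) w = \sum_(i <- r) dotv (f i) w.
Proof.
elim: r => [|a r IH]; last by rewrite !big_cons dotvDl IH.
by rewrite !big_nil /dotv big1 // => j _; rewrite mxE mul0r.
Qed.

Lemma block_sum (R : realType) d n p N (grad : 'I_n -> 'cV[R]_d -> 'cV[R]_d) (y : 'cV[R]_d) :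
  (0 < p)%N -> (0 < N)%N -> n = (N * p)%N ->
  \sum_(i < N) block_grad p grad i y = N%:R *: full_grad grad y.
Proof.
move=> p0 N0 nE.
rewrite /block_grad /full_grad -scaler_sumr.
have -> : \sum_(i < N) \sum_(j < n | (i * p <= j < i * p + p)%N) grad j y =
          \sum_(j < n) grad j y.
  under eq_bigr do rewrite big_mkcond /=.
  rewrite exchange_big /=; apply: eq_bigr => j _.
  have jN : (j %/ p < N)%N.
    by rewrite ltn_divLR // -nE.
  rewrite (bigD1 (Ordinal jN)) //= big1.
    have -> : (j %/ p * p <= j < j %/ p * p + p)%N.
      apply/andP; split; first by rewrite leq_trunc_div.
      by rewrite -mulSnr -ltn_divLR.
    by rewrite addr0.
  move=> i /eqP hi; case: ifP => // /andP [h1 h2]; exfalso; apply: hi.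
  apply: val_inj => /=; apply/eqP; rewrite eqn_leq; apply/andP; split.
    by rewrite leq_divRL.
  by rewrite -ltnS ltn_divLR // mulSnr.
rewrite scalerA; congr (_ *: _).
rewrite nE natrM; field.
by rewrite !pnatr_eq0 -!lt0n N0 p0.
Qed.

Lemma expect_ge0 (R : realType) N t (F : t.-tuple 'I_N -> R) :
  (forall s, 0 <= F s) -> 0 <= expect F.
Proof.
move=> h; rewrite /expect mulr_ge0 ?invr_ge0 ?exprn_ge0 ?ler0n //.
by apply: sumr_ge0 => s _; exact: h.
Qed.

Theorem lemma4p1 (R : realType) (m d n p : nat)
  (f1 : 'cV[R]_m -> \bar R) (B : 'M[R]_(m, d))
  (phi : 'I_n -> 'cV[R]_d -> R) (grad : 'I_n -> 'cV[R]_d -> 'cV[R]_d)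
  (c alpha lambda rho_max rho_min : R)
  (X : forall t : nat, t.-tuple 'I_(n %/ p) -> 'cV[R]_d)
  (V : forall t : nat, t.-tuple 'I_(n %/ p) -> 'cV[R]_m)
  (xs : 'cV[R]_d) (vs : 'cV[R]_m) :
  proper_fun f1 -> econvex_fun f1 -> lower_semicontinuous f1 ->
  (forall j, convex_fun (phi j)) -> (forall j, is_gradient (phi j) (grad j)) ->
  (0 < p)%N -> (p %| n)%N ->
  eigenvalue (B *m B^T) rho_max ->
  (forall a, eigenvalue (B *m B^T) a -> a <= rho_max) ->
  eigenvalue (B *m B^T) rho_min ->
  (forall a, eigenvalue (B *m B^T) a -> rho_min <= a) ->
  0 < c -> 0 < alpha <= 1 -> 0 < lambda <= rho_max^-1 ->
  algorithm1 p f1 B grad c alpha lambda X V ->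
  (forall x, (f1 (B *m xs) + (n%:R^-1 * \sum_(j < n) phi j xs)%R%:E
              <= f1 (B *m x) + (n%:R^-1 * \sum_(j < n) phi j x)%R%:E)%E) ->
  (forall k : nat, (1 <= k)%N ->
     let g := gamma c alpha k in
     let w := (lambda / g) *: (B *m (xs - g *: full_grad grad xs))
              + (1%:M - lambda *: (B *m B^T)) *m vs in
     is_prox (fun u => ((lambda / g)%R%:E * f1 ((g / lambda) *: u)%R)%E) w (w - vs)
     /\ xs = xs - g *: full_grad grad xs - g *: (B^T *m vs)) ->
  forall t : nat,
    let gk := gamma c alpha t.+1 in
    let gk1 := gamma c alpha t.+2 in
    expect_next (fun s i =>
        sqn (X t.+1 (rcons_tuple s i) - xs)
        + gk1 ^+ 2 / lambda * sqn (V t.+1 (rcons_tuple s i) - vs))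
    <= expect (fun s => sqn (X t s - xs))
       + gk ^+ 2 / lambda * (1 - lambda * rho_min)
           * expect (fun s => sqn (V t s - vs))
       - 2 * gk * expect (fun s =>
           dotv (full_grad grad (X t s) - full_grad grad xs) (X t s - xs))
       + gk ^+ 2 * expect_next (fun s i =>
           sqn (block_grad p grad i (X t s) - full_grad grad xs)).
Proof.
move=> pf conv _ _ _ p0 pn emax hmax emin hmin c0 /andP[al0 al1] /andP[l0 lmax]
  Halg _ Hfix t; cbv zeta; set gk := gamma c alpha t.+1; set gk1 := gamma c alpha t.+2.
have rho0 : 0 < rho_max by rewrite -invr_gt0; exact: lt_le_trans l0 lmax.
have lr : lambda * rho_max <= 1.
  have := ler_wpM2r (ltW rho0) lmax; rewrite mulVf ?gt_eqF //.
have hb := @spec_bounds _ _ _ B rho_max rho_min emax hmax hmin.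
have hminw : forall w, rho_min * sqn w <= sqn (B^T *m w).
  by move=> w; case/andP: (hb w).
have hpsd : forall w, lambda * sqn (B^T *m w) <= sqn w.
  move=> w; case/andP: (hb w) => _ h; have := sqn_ge0 w; nra.
have hg : forall k, (0 < k)%N -> 0 < gamma c alpha k.
  by move=> k k0; rewrite /gamma divr_gt0 // powR_gt0 // ltr0n.
have g0 : 0 < gk by exact: hg.
have gg : 0 <= gk1 <= gk.
  rewrite ltW ?hg //= /gk1 /gk /gamma ler_pM2l // lef_pV2 ?posrE ?powR_gt0 ?ltr0n //.
  rewrite ge0_ler_powR ?ltW ?nnegrE ?ler0n // ?ltr_nat //.
have := Hfix t.+1 isT; cbv zeta => -[P2 hxs].
have pw : forall (s : t.-tuple 'I_(n %/ p)) (i : 'I_(n %/ p)),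
  sqn (X t.+1 (rcons_tuple s i) - xs) + gk1 ^+ 2 / lambda * sqn (V t.+1 (rcons_tuple s i) - vs)
  <= sqn (X t s - xs) + gk ^+ 2 / lambda * (1 - lambda * rho_min) * sqn (V t s - vs)
     - 2 * gk * dotv (block_grad p grad i (X t s) - full_grad grad xs) (X t s - xs)
     + gk ^+ 2 * sqn (block_grad p grad i (X t s) - full_grad grad xs).
  move=> s i; have := Halg t s i; cbv zeta => -[[q [Pq Vq]] Xq].
  exact: (@pointwise R m d f1 B gk gk1 lambda rho_min (X t s) xs
    (block_grad p grad i (X t s)) (full_grad grad xs) (X t.+1 (rcons_tuple s i))
    (V t s) vs (V t.+1 (rcons_tuple s i)) q g0 l0 gg pf conv hminw hpsd Pq Vq Xq P2 hxs).
set N := (n %/ p)%N.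
set A := fun s : t.-tuple 'I_N => sqn (X t s - xs).
set Bv := fun s : t.-tuple 'I_N => sqn (V t s - vs).
set Dd := fun s : t.-tuple 'I_N =>
  dotv (full_grad grad (X t s) - full_grad grad xs) (X t s - xs).
set Ee := fun (s : t.-tuple 'I_N) (i : 'I_N) =>
  sqn (block_grad p grad i (X t s) - full_grad grad xs).
set K := gk ^+ 2 / lambda * (1 - lambda * rho_min).
have K0 : 0 <= K.
  have := hmin _ emax; have := ler_wpM2l (ltW l0) (hmin _ emax).
  rewrite /K => h1 h2; apply: mulr_ge0; first by rewrite divr_ge0 ?sqr_ge0 ?ltW.
  rewrite subr_ge0; exact: le_trans h1 lr.
case: (posnP N) => [N0|Npos].
  have hN : (N%:R : R) = 0 by rewrite N0.
  have n0 : (n%:R : R) = 0.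
    by rewrite -(divnK pn) -/N N0 mul0n.
  have hfg : forall y, full_grad grad y = 0.
    by move=> y; rewrite /full_grad n0 invr0 scale0r.
  rewrite /expect_next hN expr0n /= invr0 !mul0r mulr0 addr0.
  have -> : expect Dd = 0.
    rewrite /expect big1 ?mulr0 // => s _; rewrite /Dd !hfg subr0.
    by rewrite /dotv big1 // => j _; rewrite mxE mul0r.
  rewrite mulr0 subr0; apply: addr_ge0; first by apply: expect_ge0 => s; exact: sqn_ge0.
  by apply: mulr_ge0 => //; apply: expect_ge0 => s; exact: sqn_ge0.
have hN0 : (N%:R : R) != 0 by rewrite pnatr_eq0 -lt0n.
have nE : n = (N * p)%N by rewrite divnK.
have inner : forall s : t.-tuple 'I_N, \sum_(i < N) (A s + K * Bv s
   - 2 * gk * dotv (block_grad p grad i (X t s) - full_grad grad xs) (X t s - xs)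
   + gk ^+ 2 * Ee s i) = N%:R * (A s + K * Bv s - 2 * gk * Dd s) + gk ^+ 2 * \sum_(i < N) Ee s i.
  move=> s.
  have hD : \sum_(i < N) dotv (block_grad p grad i (X t s) - full_grad grad xs) (X t s - xs)
      = N%:R * Dd s.
    rewrite -dotv_suml sumrB block_sum // sumr_const card_ord -(scaler_nat N (full_grad grad xs)) -scalerBr dotvZl.
    by [].
  rewrite big_split /= sumrB -mulr_sumr hD -mulr_sumr sumr_const card_ord -mulr_natl.
  ring.
rewrite /expect_next.
have inv0 : 0 <= (N%:R ^+ t.+1 : R)^-1 by rewrite invr_ge0 exprn_ge0 ?ler0n.
apply: (le_trans (ler_wpM2l inv0 (ler_sum _ (fun s _ => ler_sum _ (fun i _ => pw s i))))).
rewrite (eq_bigr _ (fun s _ => inner s)).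
rewrite big_split /= -mulr_sumr -mulr_sumr sumrB big_split /= -!mulr_sumr.
rewrite /expect le_eqVlt; apply/orP; left; apply/eqP.
rewrite exprS invfM; field.
by rewrite expf_neq0.
Qed.
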